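(* Let $a\ge1$ and $n\ge0$ be integers. Then $\hom_{\Bbbk\mathbf{FA}}(\overline P^{\otimes n},\overline P^{\otimes a})$ is isomorphic, as a $\Bbbk\mathfrak S_n\otimes\Bbbk\mathfrak S_a^{\mathrm{op}}$-module, to the kernel of the total restriction map $$\Bbbk\mathbf{FS}(\mathbf a,\mathbf n)\longrightarrow\bigoplus_{i=1}^a\Bbbk\mathbf{FS}(\mathbf a\setminus\{i\},\mathbf n),$$ whose $i$-th component sends $[f]$ (for a surjection $f:\mathbf a\to\mathbf n$) to $[f|_{\mathbf a\setminus\{i\}}]$ if the restriction $f|_{\mathbf a\setminus\{i\}}$ is surjective, and to $0$ otherwise. (Here $\mathfrak S_n$ acts by postcomposition and $\mathfrak S_a$ by precomposition.)
   Context: Let $\Bbbk$ be a field. $\mathbf{FA}$ denotes the category of finite sets and all maps, and $\mathbf{FI}$, $\mathbf{FS}$, $\mathbf{FB}$ its wide subcategories of injections, surjections and bijections respectively; $\mathbf n=\{1,\dots,n\}$ for $n\in\mathbb N$ ($\mathbf 0=\emptyset$), and $\mathfrak S_n$ is the symmetric group. For a category $\mathcal C$, $\Bbbk\mathcal C(X,Y)$ is the $\Bbbk$-vector space with basis $\mathcal C(X,Y)$. A $\Bbbk\mathbf{FA}$-module is a functor from $\mathbf{FA}$ to $\Bbbk$-vector spaces (these form the abelian category $\mathcal F(\mathbf{FA})$); $\otimes$ denotes the pointwise tensor product over $\Bbbk$, and $\hom_{\Bbbk\mathbf{FA}}$ denotes natural transformations. $P^{\mathbf{FA}}_{\mathbf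 n}:=\Bbbk\mathbf{FA}(\mathbf n,-)$, so $P^{\mathbf{FA}}_{\mathbf n}(X)\cong\Bbbk[X]^{\otimes n}$ (where $\Bbbk[X]$ has basis $\{[x]:x\in X\}$), with the right $\mathfrak S_n$-action by precomposition, equivalently place permutation of tensor factors; write $P^{\mathbf{FA}}:=P^{\mathbf{FA}}_{\mathbf 1}$. Let $\overline{\Bbbk}$ be the functor with value $\Bbbk$ on non-empty sets (all maps acting by the identity) and $0$ on $\emptyset$, and $\Bbbk_{\mathbf 0}$ the functor with value $\Bbbk$ on $\emptyset$ and $0$ on non-empty sets. $\overline P$ is the kernel of the surjection $P^{\mathbf{FA}}\to\overline\Bbbk$, $[x]\mapsto 1$; thus $\overline P(X)=\{\sum_x a_x[x]:\sum_x a_x=0\}$. For $n\ge1$, $\overline P^{\otimes n}$ is the $n$-fold pointwise tensor power, a subfunctor of $P^{\mathbf{FA}}_{\mathbf n}$ stable under the place-permutation right action of $\mathfrak S_n$; by convention $\overline P^{\otimes 0}:=\overline\Bbbk$. The action of $\mathfrak S_a$ on $\hom_{\Bbbk\mathbf{FA}}(\overline P^{\otimes n},\overline P^{\otimes a})$ comes from the place-permutation action on $\overline P^{\otimes a}$, and that of $\mathfrak S_n$ from the one on $\overline P^{\otimes n}$. *)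

(* Defs.v *)
From HB Require Import structures.
From mathcomp Require Import all_boot all_order all_algebra all_fingroup.
Set Implicit Arguments. Unset Strict Implicit. Unset Printing Implicit Defensive.
Import GRing.Theory.
Local Open Scope ring_scope.

(* Skeleton of FA: objects 'I_m (m : nat), morphisms {ffun 'I_m -> 'I_k}. *)
Notation V K n m := ({ffun {ffun 'I_n -> 'I_m} -> K^o}) (only parsing).
Notation C K a n := ({ffun {ffun 'I_a -> 'I_n} -> K^o}) (only parsing).

Section Defs.
Variable K : fieldType.

(* P^{FA}_n(m) = K[m]^{(x) n}: basis = tuples s : n -> m, i.e. [s 1]⊗...⊗[s n]. *)


Definition push n m k (g : {ffun 'I_m -> 'I_k}) (v : V K n m) : V K n k :=
  [ffun t => \sum_(s : {ffun 'I_n -> 'I_m} | [ffun j => g (s j)] == t) v s].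

Definition inPbar m (v : {ffun 'I_m -> K}) : Prop := \sum_i v i = 0.

Definition ptensor n m (vs : 'I_n -> {ffun 'I_m -> K}) : V K n m :=
  [ffun s : {ffun 'I_n -> 'I_m} => \prod_(j < n) vs j (s j)].

(* Pbar^{(x) n}(m): span of pure tensors of elements of Pbar(m) for n >= 1;
   convention Pbar^{(x) 0} = kbar (0 on the empty set, K otherwise). *)
Definition inPbarT n m (x : V K n m) : Prop :=
  if n is 0 then (m = 0%N -> x = 0)
  else exists (r : nat) (vs : 'I_r -> 'I_n -> {ffun 'I_m -> K}),
         (forall i j, inPbar (vs i j)) /\ x = \sum_(i < r) ptensor (vs i).

(* A natural transformation Pbar^{(x) n} -> Pbar^{(x) a}, represented by a
   family of maps on the ambient spaces; only the values on Pbar^{(x) n}(m)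
   matter (two families agreeing there are the same natural transformation). *)
Definition NatTr n a (eta : forall m, V K n m -> V K a m) : Prop :=
  [/\ forall m x, inPbarT x -> inPbarT (eta m x),
      forall m (c : K) (x y : V K n m), inPbarT x -> inPbarT y ->
        eta m (c *: x + y) = c *: eta m x + eta m y
    & forall m k (g : {ffun 'I_m -> 'I_k}) (x : V K n m), inPbarT x ->
        eta k (push g x) = push g (eta m x)].

Definition sameNat n a (eta eta' : forall m, V K n m -> V K a m) : Prop :=
  forall m (x : V K n m), inPbarT x -> eta m x = eta' m x.

(* place permutation (right action, basis [s] |-> [s o tau]) *)
Definition rperm n m (tau : {perm 'I_n}) (x : V K n m) : V K n m :=
  [ffun t : {ffun 'I_n -> 'I_m} => x [ffun j => t ((tau^-1)%g j)]].

Definition actL n a (sigma : {perm 'I_n}) (eta : forall m, V K n m -> V K a m) :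
  forall m, V K n m -> V K a m := fun m x => eta m (rperm sigma x).
Definition actR n a (eta : forall m, V K n m -> V K a m) (tau : {perm 'I_a}) :
  forall m, V K n m -> V K a m := fun m x => rperm tau (eta m x).

(* k FS(a,n): coefficient vectors on maps a -> n supported on surjections *)


Definition surjb a n (f : {ffun 'I_a -> 'I_n}) : bool := [forall y, exists j, f j == y].
Definition surj_off a n (i : 'I_a) (f : {ffun 'I_a -> 'I_n}) : bool :=
  [forall y, exists j, (j != i) && (f j == y)].
(* a map a\{i} -> n encoded as a map a -> option n with value None exactly at i *)
Definition res a n (i : 'I_a) (f : {ffun 'I_a -> 'I_n}) : {ffun 'I_a -> option 'I_n} :=
  [ffun j => if j == i then None else Some (f j)].

Definition resmap a n (c : C K a n) :
  {ffun 'I_a -> {ffun {ffun 'I_a -> option 'I_n} -> K}} :=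
  [ffun i : 'I_a => [ffun h : {ffun 'I_a -> option 'I_n} =>
     \sum_(f : {ffun 'I_a -> 'I_n} | surjb f && surj_off i f && (res i f == h)) c f]].

Definition inKer a n (c : C K a n) : Prop :=
  (forall f, ~~ surjb f -> c f = 0) /\ resmap c = 0.

Definition postL a n (sigma : {perm 'I_n}) (c : C K a n) : C K a n :=
  [ffun h : {ffun 'I_a -> 'I_n} => c [ffun j => (sigma^-1)%g (h j)]].
Definition preR a n (c : C K a n) (tau : {perm 'I_a}) : C K a n :=
  [ffun h : {ffun 'I_a -> 'I_n} => c [ffun j => h ((tau^-1)%g j)]].

End Defs.

(* Main.v *)
Require Import Defs.
From HB Require Import structures.
From mathcomp Require Import all_boot all_order all_algebra all_fingroup.
Set Implicit Arguments. Unset Strict Implicit. Unset Printing Implicit Defensive.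
Import GRing.Theory.
Local Open Scope ring_scope.

Section Work.
Variable K : fieldType.
Local Notation VV n m := ({ffun {ffun 'I_n -> 'I_m} -> K^o}).

Definition delta m (y : 'I_m) : {ffun 'I_m -> K} := [ffun z => (z == y)%:R].
Definition pushv m k (g : {ffun 'I_m -> 'I_k}) (w : {ffun 'I_m -> K}) : {ffun 'I_k -> K} :=
  [ffun y => \sum_(x | g x == y) w x].
Definition upd (A : finType) (B : Type) (t : {ffun A -> B}) (i : A) (y : B) : {ffun A -> B} :=
  [ffun j => if j == i then y else t j].

Lemma scaleKo n m (c : K) (x : VV n m) s : (c *: x) s = c * x s.
Proof. by rewrite ffunE. Qed.

Lemma push_ptensor n m k (g : {ffun 'I_m -> 'I_k}) (vs : 'I_n -> {ffun 'I_m -> K}) :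
  push g (ptensor vs) = ptensor (fun j => pushv g (vs j)).
Proof.
apply/ffunP => t; rewrite !ffunE.
under [RHS]eq_bigr do rewrite ffunE.
rewrite bigA_distr_big_dep.
apply: eq_big => [s|s _]; last by rewrite ffunE.
apply/eqP/familyP => [<- j|H]; first by rewrite ffunE -topredE /=.
by apply/ffunP => j; rewrite ffunE; apply/eqP; have := H j; rewrite -topredE.
Qed.


Definition uu n : VV n n.+1 := ptensor (fun j => delta (lift ord0 j) - delta ord0).

Lemma ptensor_ext n m (vs ws : 'I_n -> {ffun 'I_m -> K}) :
  (forall j, vs j = ws j) -> ptensor vs = ptensor ws.
Proof. by move=> H; apply/ffunP => s; rewrite !ffunE; apply: eq_bigr => j _; rewrite H. Qed.

Lemma pushv_delta m k (g : {ffun 'I_m -> 'I_k}) y : pushv g (delta y) = delta (g y).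
Proof.
apply/ffunP => z; rewrite !ffunE.
under eq_bigr do rewrite ffunE.
rewrite big_mkcond (bigD1 y) //= eqxx big1 ?addr0.
  by rewrite eq_sym; case: eqP.
by move=> x /negbTE ->; case: ifP.
Qed.

Lemma pushvB m k (g : {ffun 'I_m -> 'I_k}) w1 w2 :
  pushv g (w1 - w2) = pushv g w1 - pushv g w2.
Proof.
apply/ffunP => z; rewrite !ffunE -sumrB; apply: eq_bigr => x _; by rewrite !ffunE.
Qed.

Lemma push_u n k (g : {ffun 'I_n.+1 -> 'I_k}) :
  push g (uu n) = ptensor (fun j => delta (g (lift ord0 j)) - delta (g ord0)).
Proof.
rewrite push_ptensor; apply: ptensor_ext => j.
by rewrite pushvB !pushv_delta.
Qed.

Lemma inPbarT0 n m : inPbarT (0 : VV n m).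
Proof.
case: n => [//|n]; exists 0%N, (fun _ _ => 0); split; first by move=> [].
by rewrite big_ord0.
Qed.

Lemma inPbarT_pt n m (vs : 'I_n.+1 -> {ffun 'I_m -> K}) :
  (forall j, inPbar (vs j)) -> inPbarT (ptensor vs).
Proof. by move=> H; exists 1%N, (fun _ => vs); split => //; rewrite big_ord1. Qed.

Lemma inPbarT_add n m (x y : VV n.+1 m) : inPbarT x -> inPbarT y -> inPbarT (x + y).
Proof.
move=> [r1 [vs1 [H1 ->]]] [r2 [vs2 [H2 ->]]].
exists (r1 + r2)%N, (fun i => match split i with inl i1 => vs1 i1 | inr i2 => vs2 i2 end).
split.
  by move=> i j; case: (split i).
rewrite big_split_ord /=; congr (_ + _); apply: eq_bigr => i _.
  by rewrite (unsplitK (inl i)).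
by rewrite (unsplitK (inr i)).
Qed.

Lemma scale_ptensor n m (c : K) (vs : 'I_n.+1 -> {ffun 'I_m -> K}) :
  c *: ptensor vs = ptensor (fun j => if j == ord0 then [ffun y => c * vs j y] else vs j).
Proof.
apply/ffunP => s; rewrite !ffunE !big_ord_recl /= ffunE -mulrA. done.
Qed.

Lemma inPbarT_scale n m (c : K) (x : VV n.+1 m) : inPbarT x -> inPbarT (c *: x).
Proof.
move=> [r [vs [H ->]]].
exists r, (fun i j => if j == ord0 then [ffun y => c * vs i j y] else vs i j); split.
  move=> i j; case: (j == ord0) => //; rewrite /inPbar.
  under eq_bigr do rewrite ffunE.
  by rewrite -mulr_sumr H mulr0.
rewrite scaler_sumr; apply: eq_bigr => i _; exact: scale_ptensor.
Qed.

Lemma inPbarT_sum n m (I : Type) (s : seq I) (P : pred I) (F : I -> VV n.+1 m) :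
  (forall i, P i -> inPbarT (F i)) -> inPbarT (\sum_(i <- s | P i) F i).
Proof.
move=> H; apply: big_ind => //; [exact: inPbarT0 | exact: inPbarT_add].
Qed.

Lemma eta0 n a (eta : forall m, VV n m -> VV a m) m : NatTr eta -> eta m 0 = 0.
Proof.
case=> _ Hl _; have := Hl m 1 0 0 (inPbarT0 _ _) (inPbarT0 _ _).
rewrite !scale1r addr0 => /(congr1 (fun z => z - eta m 0)).
by rewrite subrr addrK.
Qed.

Lemma eta_sum n a (eta : forall m, VV n.+1 m -> VV a m) m (I : Type) (s : seq I)
   (c : I -> K) (F : I -> VV n.+1 m) :
  NatTr eta -> (forall i, inPbarT (F i)) ->
  eta m (\sum_(i <- s) c i *: F i) = \sum_(i <- s) c i *: eta m (F i).
Proof.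
move=> He HF; elim: s => [|i s IH]; first by rewrite !big_nil eta0.
rewrite !big_cons; case: He => _ Hl _; rewrite Hl ?IH //.
by apply: inPbarT_sum => j _; apply: inPbarT_scale.
Qed.


Lemma updE (A : finType) (B : Type) (t : {ffun A -> B}) i y j :
  upd t i y j = if j == i then y else t j.
Proof. by rewrite ffunE. Qed.

Lemma upd_id (A : finType) (B : eqType) (t : {ffun A -> B}) i : upd t i (t i) = t.
Proof. by apply/ffunP => j; rewrite updE; case: eqP => // ->. Qed.

Lemma contr_Pbar a m (x : VV a.+1 m) : inPbarT x ->
  forall i t, \sum_y x (upd t i y) = 0.
Proof.
move=> [r [vs [H ->]]] i t.
under eq_bigr do rewrite sum_ffunE.
rewrite exchange_big big1 // => k _.
under eq_bigr do rewrite ffunE (bigD1 i) //= updE eqxx.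
rewrite (eq_bigr (fun y => vs k i y * \prod_(i1 < a.+1 | i1 != i) vs k i1 (t i1))); last first.
  move=> y _; congr (_ * _); apply: eq_bigr => j /negbTE Hj; by rewrite updE Hj.
have := H k i; rewrite /inPbar => H0.
by rewrite -(big_distrl (R := K)) /= H0 mul0r.
Qed.

Lemma det0 a m (w : VV a m) (b : 'I_m) :
  (forall i t, \sum_y w (upd t i y) = 0) ->
  (forall t : {ffun 'I_a -> 'I_m}, (forall j, t j != b) -> w t = 0) -> w = 0.
Proof.
move=> Hc Ha.
suff H : forall k (t : {ffun 'I_a -> 'I_m}), (#|[pred j | t j == b]| <= k)%N -> w t = 0.
  by apply/ffunP => t; rewrite ffunE (H _ t (leqnn _)).
elim=> [|k IH] t Hk.
  apply: Ha => j; apply/negP => Hj.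
  by move: Hk; rewrite leqn0 => /eqP/card0_eq/(_ j); rewrite inE Hj.
case: (pickP [pred j | t j == b]) => [i /= /eqP Hi | Hn]; last first.
  by apply: Ha => j; have := Hn j; rewrite /= => ->.
have := Hc i t; rewrite (bigD1 b) //= -Hi upd_id => /eqP.
rewrite addrC addr_eq0 big1 => [|y Hy].
  by rewrite eq_sym oppr_eq0 => /eqP.
apply: IH; rewrite -ltnS; apply: leq_trans Hk.
rewrite [X in (_ < X)%N](cardD1 i) inE /= Hi eqxx add1n ltnS.
apply: subset_leq_card; apply/subsetP => j; rewrite !inE updE.
case: (j =P i) => [->|/eqP Hji]; first by rewrite -Hi (negbTE Hy).
by [].
Qed.

Lemma prod_eqR a m (t t' : {ffun 'I_a -> 'I_m}) :
  \prod_j (((t j == t' j)%:R) : K) = (t == t')%:R.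
Proof.
case: (boolP [forall j, t j == t' j]) => [/forallP H|].
  have -> : t = t' by apply/ffunP => j; apply/eqP.
  by rewrite eqxx big1 // => j _; rewrite eqxx.
rewrite negb_forall => /existsP [j Hj].
rewrite (bigD1 j) //= (negbTE Hj) mul0r.
by case: eqP => // E; move: Hj; rewrite E eqxx.
Qed.

Lemma sum_delta m (y : 'I_m) : \sum_i (((i == y)%:R) : K) = 1.
Proof. by rewrite (bigD1 y) //= eqxx big1 ?addr0 // => i /negbTE ->. Qed.

Lemma inPbar_dv m (y b : 'I_m) : inPbar (delta y - delta b).
Proof.
rewrite /inPbar; under eq_bigr do rewrite !ffunE.
by rewrite sumrB !sum_delta subrr.
Qed.


Lemma Pbar_of_contr a m (w : VV a.+1 m) :
  (forall i t, \sum_y w (upd t i y) = 0) -> inPbarT w.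
Proof.
case: m w => [|m] w Hc.
  have -> : w = 0 by apply/ffunP => t; case: (t ord0).
  exact: inPbarT0.
set W := \sum_(t : {ffun 'I_a.+1 -> 'I_m.+1} | [forall j, t j != ord0])
           w t *: ptensor (fun j => delta (t j) - delta ord0).
have HW : inPbarT W.
  apply: inPbarT_sum => t _; apply: inPbarT_scale; apply: inPbarT_pt => j; exact: inPbar_dv.
suff -> : w = W by [].
apply/eqP; rewrite -subr_eq0; apply/eqP.
apply: (det0 (b := ord0)).
  move=> i t; under eq_bigr do rewrite !ffunE.
  by rewrite sumrB Hc (contr_Pbar HW) subrr.
move=> t Ht; rewrite !ffunE sum_ffunE.
have Ht' : [forall j, t j != ord0] by apply/forallP.
rewrite (bigD1 t) //= big1 => [|t' /andP [_ Hne]].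
  rewrite !ffunE addr0.
  under eq_bigr do rewrite !ffunE (negbTE (Ht _)) subr0.
  by rewrite prod_eqR eqxx -[_ *: _]/(w t * 1) mulr1 subrr.
rewrite scaleKo ffunE.
under eq_bigr do rewrite !ffunE (negbTE (Ht _)) subr0.
by rewrite prod_eqR eq_sym (negbTE Hne) mulr0.
Qed.


Definition gmap n m (b : 'I_m) (s : {ffun 'I_n -> 'I_m}) : {ffun 'I_n.+1 -> 'I_m} :=
  [ffun z => if unlift ord0 z is Some j then s j else b].

Lemma gmap0 n m (b : 'I_m) (s : {ffun 'I_n -> 'I_m}) : gmap b s ord0 = b.
Proof. by rewrite ffunE unlift_none. Qed.

Lemma gmapS n m (b : 'I_m) (s : {ffun 'I_n -> 'I_m}) j : gmap b s (lift ord0 j) = s j.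
Proof. by rewrite ffunE liftK. Qed.

Lemma push_gmap n m (b : 'I_m) (s : {ffun 'I_n -> 'I_m}) :
  push (gmap b s) (uu n) = ptensor (fun j => delta (s j) - delta b).
Proof. by rewrite push_u; apply: ptensor_ext => j; rewrite gmap0 gmapS. Qed.

Lemma inPbarT_u n : inPbarT (uu n.+1).
Proof. apply: inPbarT_pt => j; exact: inPbar_dv. Qed.

Lemma inPbarT_pushu n m (g : {ffun 'I_n.+2 -> 'I_m}) : inPbarT (push g (uu n.+1)).
Proof. rewrite push_u; apply: inPbarT_pt => j; exact: inPbar_dv. Qed.

Lemma distrK (I J : finType) (F : I -> J -> K) :
  \sum_(f : {ffun I -> J}) \prod_i F i (f i) = \prod_i \sum_j F i j.
Proof. by rewrite bigA_distr_bigA. Qed.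

Lemma decomp n m (b : 'I_m) (vs : 'I_n -> {ffun 'I_m -> K}) : (forall j, inPbar (vs j)) ->
  ptensor vs = \sum_(s : {ffun 'I_n -> 'I_m}) (\prod_j vs j (s j)) *: push (gmap b s) (uu n).
Proof.
move=> H; apply/ffunP => t; rewrite sum_ffunE ffunE.
under [RHS]eq_bigr do rewrite scaleKo push_gmap ffunE -big_split /=.
apply: (etrans _ (esym (distrK (fun j y => vs j y * (delta y - delta b) (t j))))).
apply: eq_bigr => j _.
under eq_bigr do rewrite !ffunE mulrBr.
rewrite sumrB -(big_distrl (R := K)) /= H mul0r subr0.
rewrite (bigD1 (t j)) //= eqxx mulr1 big1 ?addr0 // => y Hy.
by rewrite eq_sym (negbTE Hy) mulr0.
Qed.

Lemma eta_decomp n a (eta : forall m, VV n.+1 m -> VV a m) m (b : 'I_m)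
   (vs : 'I_n.+1 -> {ffun 'I_m -> K}) : NatTr eta -> (forall j, inPbar (vs j)) ->
  eta m (ptensor vs) =
  \sum_(s : {ffun 'I_n.+1 -> 'I_m}) (\prod_j vs j (s j)) *: push (gmap b s) (eta _ (uu n.+1)).
Proof.
move=> He H; rewrite (decomp b H) eta_sum //; last by move=> s; exact: inPbarT_pushu.
apply: eq_bigr => s _; case: He => _ _ Hn; rewrite Hn //; exact: inPbarT_u.
Qed.


Lemma upd_at (A : finType) (B : Type) (t : {ffun A -> B}) i y : upd t i y i = y.
Proof. by rewrite updE eqxx. Qed.

Lemma upd_upd (A : finType) (B : Type) (t : {ffun A -> B}) i y z :
  upd (upd t i y) i z = upd t i z.
Proof. by apply/ffunP => j; rewrite !updE; case: eqP. Qed.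

Lemma upd_eq (A : finType) (B : eqType) (t : {ffun A -> B}) i z :
  (upd t i z == t) = (t i == z).
Proof.
apply/eqP/eqP => [<-|<-]; [by rewrite upd_at | exact: upd_id].
Qed.

Definition iota a n (f : {ffun 'I_a -> 'I_n}) : {ffun 'I_a -> 'I_n.+1} :=
  [ffun j => lift ord0 (f j)].

Definition Phi n a (eta : forall m, VV n.+1 m -> VV a m) : C K a n.+1 :=
  [ffun f => eta n.+2 (uu n.+1) (iota f)].

Lemma determ_v a n (v v' : VV a.+1 n.+2) : inPbarT v -> inPbarT v' ->
  (forall f, v (iota f) = v' (iota f)) -> v = v'.
Proof.
move=> Hv Hv' H; apply/eqP; rewrite -subr_eq0; apply/eqP.
apply: (det0 (b := ord0)).
  move=> i t; under eq_bigr do rewrite !ffunE.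
  by rewrite sumrB (contr_Pbar Hv) (contr_Pbar Hv') subrr.
move=> t Ht.
have -> : t = iota [ffun j => odflt ord0 (unlift ord0 (t j))].
  apply/ffunP => j; rewrite !ffunE; case: unliftP => [k -> //|E].
  by move: (Ht j); rewrite E eqxx.
by rewrite !ffunE H subrr.
Qed.

Lemma eta_formula n a (eta : forall m, VV n.+1 m -> VV a m) m r
   (vs : 'I_r -> 'I_n.+1 -> {ffun 'I_m.+1 -> K}) :
  NatTr eta -> (forall i j, inPbar (vs i j)) ->
  eta m.+1 (\sum_(i < r) ptensor (vs i)) =
  \sum_(i < r) \sum_(s : {ffun 'I_n.+1 -> 'I_m.+1})
     (\prod_j vs i j (s j)) *: push (gmap ord0 s) (eta _ (uu n.+1)).
Proof.
move=> He H.
rewrite (eq_bigr (fun i => 1 *: ptensor (vs i))); last by move=> i _; rewrite scale1r.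
rewrite eta_sum //; last by move=> i; apply: inPbarT_pt.
apply: eq_bigr => i _; rewrite scale1r; exact: eta_decomp.
Qed.

Lemma Phi_inj n a (eta eta' : forall m, VV n.+1 m -> VV a.+1 m) :
  NatTr eta -> NatTr eta' -> Phi eta = Phi eta' -> sameNat eta eta'.
Proof.
move=> He He' HP m x [r [vs [H ->]]].
clear x; case: m vs H => [|m] vs H.
  by apply/ffunP => t; case: (t ord0).
rewrite !eta_formula //.
have -> // : eta _ (uu n.+1) = eta' _ (uu n.+1).
apply: determ_v.
- by case: He => Hp _ _; apply: Hp; exact: inPbarT_u.
- by case: He' => Hp _ _; apply: Hp; exact: inPbarT_u.
by move=> f; have := congr1 (fun c : C K a.+1 n.+1 => c f) HP; rewrite !ffunE.
Qed.


Lemma eta_push n a (eta : forall m, VV n.+1 m -> VV a m) k (g : {ffun 'I_n.+2 -> 'I_k}) :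
  NatTr eta -> eta k (push g (uu n.+1)) = push g (eta _ (uu n.+1)).
Proof. by case=> _ _ Hn; apply: Hn; exact: inPbarT_u. Qed.

Lemma iota_inj a n : injective (@iota a n).
Proof.
move=> f f' E; apply/ffunP => j; have := congr1 (fun h : {ffun 'I_a -> 'I_n.+1} => h j) E.
by rewrite !ffunE => /lift_inj.
Qed.

Lemma Phi_nonsurj n a (eta : forall m, VV n.+1 m -> VV a m) f :
  NatTr eta -> ~~ surjb f -> Phi eta f = 0.
Proof.
move=> He; rewrite /surjb negb_forall => /existsP [y].
rewrite negb_exists => /forallP Hy.
pose g : {ffun 'I_n.+2 -> 'I_n.+2} := [ffun z => if z == lift ord0 y then ord0 else z].
have Hg0 : push g (uu n.+1) = 0.
  rewrite push_u; apply/ffunP => s; rewrite !ffunE (bigD1 y) //= !ffunE eqxx.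
  by rewrite subrr mul0r.
have := eta_push g He; rewrite Hg0 eta0 // => /(congr1 (fun w : VV a n.+2 => w (iota f))).
rewrite !ffunE => ->; rewrite (big_pred1 (iota f)) // => s /=.
apply/eqP/eqP => [E|->]; apply/ffunP => j.
  have := congr1 (fun h : {ffun 'I_a -> 'I_n.+2} => h j) E; rewrite !ffunE.
  case: eqP => [_ E0|//]; by move: (neq_lift ord0 (f j)); rewrite -E0 eqxx.
rewrite !ffunE; case: eqP => // /lift_inj E.
by move: (Hy j); rewrite E eqxx.
Qed.

Lemma gmap_hit n m (s : {ffun 'I_n -> 'I_m.+1}) (A : finType) (sig : {ffun A -> 'I_n.+1})
   (T : {ffun A -> 'I_m.+1}) p z :
  [ffun k => gmap ord0 s (sig k)] = T -> T p = lift ord0 z ->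
  exists j, s j = lift ord0 z.
Proof.
move=> E Hp; have := congr1 (fun h : {ffun A -> 'I_m.+1} => h p) E; rewrite !ffunE Hp.
case: (unlift ord0 (sig p)) => [j Hj|H]; first by exists j.
by move: (neq_lift ord0 z); rewrite -H eqxx.
Qed.

Lemma Phi_core n a (eta : forall m, VV n.+1 m -> VV a m) i f0 :
  NatTr eta -> surj_off i f0 -> eta _ (uu n.+1) (upd (iota f0) i ord0) = 0.
Proof.
move=> He Hs.
set v := eta _ (uu n.+1).
pose incl : {ffun 'I_n.+2 -> 'I_n.+3} := [ffun z => lift ord0 z].
pose vs := fun j : 'I_n.+1 => delta (incl (lift ord0 j)) - delta (incl ord0).
have E1 : push incl (uu n.+1) = ptensor vs by rewrite push_u.
have E2 := eta_decomp ord0 He (fun j => inPbar_dv _ _ : inPbar (vs j)).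
rewrite -E1 eta_push // in E2.
set t0 := upd (iota f0) i ord0.
have := congr1 (fun w : VV a n.+3 => w [ffun k => incl (t0 k)]) E2.
rewrite ffunE (big_pred1 t0); last first.
  move=> s /=; apply/eqP/eqP => [E|->] //; apply/ffunP => k.
  by have := congr1 (fun h : {ffun 'I_a -> 'I_n.+3} => h k) E; rewrite !ffunE => /lift_inj.
move=> ->; rewrite sum_ffunE big1 // => s _.
rewrite scaleKo [X in _ * X]ffunE.
have [Hz|Hc] := eqVneq (\prod_j vs j (s j) : K^o) 0; first by rewrite Hz mul0r.
rewrite [X in _ * X]big_pred0 ?mulr0 // => sig; apply/negP => /eqP E.
have Hsj : forall j, (s j == incl (lift ord0 j)) || (s j == incl ord0).
  move=> j; move: Hc; rewrite (bigD1 j) //= mulf_eq0 negb_or => /andP [].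
  rewrite !ffunE; case: (s j == lift ord0 (lift ord0 j)); case: (s j == lift ord0 ord0) => //=; by rewrite subrr eqxx.
case: (boolP [exists j, s j == incl ord0]) => [/existsP [j /eqP Hj]|].
  have [k /andP [Hki /eqP Hk]] : exists k, (k != i) && (f0 k == j).
    by move: Hs => /forallP /(_ j) /existsP.
  have Hk' : t0 k = lift ord0 j by rewrite /t0 updE (negbTE Hki) ffunE Hk.
  have [j' Hj'] : exists j', s j' = lift ord0 (t0 k).
    by apply: (gmap_hit E); rewrite !ffunE.
  move: (Hsj j'); rewrite Hj' Hk' !ffunE => /orP [/eqP/lift_inj/lift_inj Ej|/eqP/lift_inj/eqP]; last first.
    by rewrite eq_sym (negbTE (neq_lift _ _)).
  have : s j = s j' by rewrite Ej.
  rewrite Hj Hj' Hk' ffunE => /lift_inj/eqP; by rewrite (negbTE (neq_lift _ _)).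
rewrite negb_exists => /forallP Hn.
have [j' Hj'] : exists j', s j' = lift ord0 (t0 i).
  by apply: (gmap_hit E); rewrite !ffunE.
by move: (Hn j'); rewrite Hj' /t0 upd_at ffunE eqxx.
Qed.


Lemma surj_off_surjb a n i (f : {ffun 'I_a -> 'I_n}) : surj_off i f -> surjb f.
Proof.
move=> /forallP H; apply/forallP => y; have /existsP [j /andP [_ Hj]] := H y.
by apply/existsP; exists j.
Qed.

Lemma surj_off_upd a n i (f : {ffun 'I_a -> 'I_n}) y : surj_off i (upd f i y) = surj_off i f.
Proof.
apply: eq_forallb => z; apply: eq_existsb => j; rewrite updE.
by case: eqP.
Qed.

Lemma res_upd a n i (f : {ffun 'I_a -> 'I_n}) y : res i (upd f i y) = res i f.
Proof. by apply/ffunP => j; rewrite !ffunE; case: eqP. Qed.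

Lemma res_eq a n i (f f' : {ffun 'I_a -> 'I_n}) : res i f = res i f' ->
  forall k, k != i -> f k = f' k.
Proof.
move=> E k Hk; have := congr1 (fun h : {ffun 'I_a -> option 'I_n} => h k) E.
by rewrite !ffunE (negbTE Hk) => [[]].
Qed.

Lemma iota_upd a n i (f : {ffun 'I_a -> 'I_n}) y :
  iota (upd f i y) = upd (iota f) i (lift ord0 y).
Proof. by apply/ffunP => j; rewrite !ffunE; case: eqP. Qed.

Lemma Phi_resmap n a (eta : forall m, VV n.+1 m -> VV a.+1 m) :
  NatTr eta -> resmap (Phi eta) = 0.
Proof.
move=> He; apply/ffunP => i; apply/ffunP => h; rewrite !ffunE.
case: (pickP (fun f => surjb f && surj_off i f && (res i f == h)))
   => [f0 /andP [/andP [_ Hs0] /eqP Hh0] | none]; last first.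
  by rewrite big_pred0.
rewrite (partition_big (fun f : {ffun 'I_a.+1 -> 'I_n.+1} => f i) xpredT (R := K)) //=.
rewrite (eq_bigr (fun y => Phi eta (upd f0 i y))); last first.
  move=> y _; rewrite (big_pred1 (upd f0 i y)) // => f /=.
  apply/idP/eqP => [/andP [/andP [/andP [_ Hs] /eqP Hr] /eqP Hy] | ->].
    apply/ffunP => k; rewrite updE; case: eqP => [->|/eqP Hk]; first by rewrite Hy.
    by apply: (res_eq (f := f) (f' := f0) _ Hk); rewrite Hr Hh0.
  rewrite upd_at eqxx res_upd Hh0 eqxx surj_off_upd Hs0 !andbT.
  by apply: (@surj_off_surjb _ _ i); rewrite surj_off_upd.
have HPb : inPbarT (eta _ (uu n.+1)) by case: He => Hp _ _; apply: Hp; exact: inPbarT_u.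
have Hc := contr_Pbar HPb i (iota f0).
rewrite big_ord_recl /= Phi_core // add0r in Hc.
rewrite -[RHS]Hc; apply: eq_bigr => y _; by rewrite ffunE iota_upd.
Qed.

Lemma Phi_inKer n a (eta : forall m, VV n.+1 m -> VV a.+1 m) :
  NatTr eta -> inKer (Phi eta).
Proof.
move=> He; split; last exact: Phi_resmap.
move=> f; exact: Phi_nonsurj.
Qed.


Lemma rperm_u n (sig : {perm 'I_n}) :
  rperm sig (uu n) = push (gmap ord0 [ffun j => lift ord0 (sig j)]) (uu n).
Proof.
rewrite push_gmap; apply/ffunP => t; rewrite !ffunE.
rewrite [LHS](reindex_inj (@perm_inj _ sig)); apply: eq_bigr => j _.
by rewrite !ffunE permK.
Qed.

Lemma gmap_permK n (sig : {perm 'I_n}) z :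
  gmap ord0 [ffun j => lift ord0 ((sig^-1)%g j)] (gmap ord0 [ffun j => lift ord0 (sig j)] z) = z.
Proof.
case: (unliftP ord0 z) => [j ->|->]; last by rewrite !gmap0.
by rewrite gmapS [X in gmap _ _ X]ffunE gmapS ffunE permK.
Qed.

Lemma Phi_postL n a (eta : forall m, VV n.+1 m -> VV a m) sig :
  NatTr eta -> Phi (actL sig eta) = postL sig (Phi eta).
Proof.
move=> He; apply/ffunP => f; rewrite !ffunE /actL rperm_u eta_push // ffunE.
rewrite (big_pred1 (iota [ffun k => (sig^-1)%g (f k)])) // => s /=.
apply/eqP/eqP => [E|->]; apply/ffunP => k.
  have := congr1 (fun h : {ffun 'I_a -> 'I_n.+2} => h k) E.
  rewrite [LHS]ffunE [RHS]ffunE => E'.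
  by rewrite -(gmap_permK sig (s k)) E' gmapS !ffunE.
rewrite [LHS]ffunE [X in gmap _ _ X]ffunE gmapS.
by rewrite !ffunE permKV.
Qed.

Lemma Phi_preR n a (eta : forall m, VV n.+1 m -> VV a m) tau :
  Phi (actR eta tau) = preR (Phi eta) tau.
Proof.
apply/ffunP => f; rewrite /actR !ffunE; congr (eta _ _ _).
by apply/ffunP => j; rewrite !ffunE.
Qed.


Definition precomp a n m (f : {ffun 'I_a -> 'I_n}) (x : VV n m) : VV a m :=
  [ffun t => \sum_(s : {ffun 'I_n -> 'I_m} | [ffun j => s (f j)] == t) x s].

Definition Ec a n (c : C K a n) : forall m, VV n m -> VV a m :=
  fun m x => \sum_f c f *: precomp f x.

Lemma sum_fiber (I J : finType) (h : I -> J) (P : pred J) (F : I -> K^o) :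
  \sum_(j | P j) \sum_(i | h i == j) F i = \sum_(i | P (h i)) F i.
Proof.
rewrite [RHS](partition_big h P) //=; apply: eq_bigr => j Pj.
by apply: eq_bigl => i; case: (h i =P j) => [->|_]; rewrite ?Pj ?andbF.
Qed.

Lemma precomp_push a n m k (f : {ffun 'I_a -> 'I_n}) (g : {ffun 'I_m -> 'I_k}) x :
  precomp f (push g x) = push g (precomp f x).
Proof.
apply/ffunP => t; rewrite !ffunE.
under eq_bigr do rewrite ffunE.
under [RHS]eq_bigr do rewrite ffunE.
rewrite (sum_fiber (fun s : {ffun 'I_n -> 'I_m} => [ffun j => g (s j)])
          (fun s' : {ffun 'I_n -> 'I_k} => [ffun j => s' (f j)] == t)).
rewrite (sum_fiber (fun s : {ffun 'I_n -> 'I_m} => [ffun j => s (f j)])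
          (fun t' : {ffun 'I_a -> 'I_m} => [ffun j => g (t' j)] == t)).
apply: eq_bigl => s /=.
by rewrite (_ : [ffun j => [ffun j0 => g (s j0)] (f j)] = [ffun j => g ([ffun j0 => s (f j0)] j)]) //;
  apply/ffunP => j; rewrite !ffunE.
Qed.

Lemma push_lin n m k (g : {ffun 'I_m -> 'I_k}) (I : Type) (r : seq I) (c : I -> K)
   (F : I -> VV n m) :
  push g (\sum_(i <- r) c i *: F i) = \sum_(i <- r) c i *: push g (F i).
Proof.
apply/ffunP => t; rewrite ffunE sum_ffunE.
under eq_bigr do rewrite sum_ffunE.
rewrite exchange_big; apply: eq_bigr => i _.
rewrite scaleKo ffunE mulr_sumr; apply: eq_bigr => s _; by rewrite scaleKo.
Qed.

Lemma push0 n m k (g : {ffun 'I_m -> 'I_k}) : push g (0 : VV n m) = 0.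
Proof. by apply/ffunP => t; rewrite !ffunE big1 // => s _; rewrite ffunE. Qed.

Lemma precomp_lin a n m (f : {ffun 'I_a -> 'I_n}) (c0 : K) (x y : VV n m) :
  precomp f (c0 *: x + y) = c0 *: precomp f x + precomp f y.
Proof.
apply/ffunP => t; rewrite !ffunE scaler_sumr -big_split /=.
by apply: eq_bigr => s _; rewrite !ffunE.
Qed.

Lemma sum_contr0 n m (x : VV n m) (j : 'I_n) (z0 : 'I_m) (P : pred {ffun 'I_n -> 'I_m}) :
  (forall s y, P (upd s j y) = P s) -> (forall t, \sum_y x (upd t j y) = 0) ->
  \sum_(s | P s) x s = 0.
Proof.
move=> HP Hc.
rewrite (partition_big (fun s : {ffun 'I_n -> 'I_m} => s j) xpredT (R := K^o)) //=.
rewrite (eq_bigr (fun y => \sum_(s | P s && (s j == z0)) x (upd s j y))); last first.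
  move=> y _; rewrite (reindex_onto (fun s => upd s j y) (fun s => upd s j z0)) /=; last first.
    by move=> s /andP [_ /eqP Hs]; rewrite upd_upd -Hs upd_id.
  by apply: eq_bigl => s; rewrite HP upd_at eqxx andbT upd_upd upd_eq.
rewrite exchange_big big1 // => s _; exact: Hc.
Qed.


Lemma Ec_natural a n (c : C K a n) m k (g : {ffun 'I_m -> 'I_k}) (x : VV n m) :
  Ec c (push g x) = push g (Ec c x).
Proof.
rewrite /Ec push_lin; apply: eq_bigr => f _; by rewrite precomp_push.
Qed.

Lemma Ec_lin a n (c : C K a n) m (c0 : K) (x y : VV n m) :
  Ec c (c0 *: x + y) = c0 *: Ec c x + Ec c y.
Proof.
rewrite /Ec scaler_sumr -big_split /=; apply: eq_bigr => f _.
by rewrite precomp_lin scalerDr !scalerA mulrC.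
Qed.

Lemma sum_ind (I : finType) (P : pred I) i0 :
  \sum_(i | P i) (((i == i0)%:R) : K^o) = (P i0)%:R.
Proof.
rewrite big_mkcond (bigD1 i0) //= eqxx big1 ?addr0 => [|i /negbTE ->]; last by case: (P i).
by case: (P i0).
Qed.

Lemma precomp_u a n (f f' : {ffun 'I_a -> 'I_n}) : surjb f ->
  precomp f (uu n) (iota f') = (f == f')%:R.
Proof.
move=> /forallP Hs; rewrite ffunE.
pose s0 : {ffun 'I_n -> 'I_n.+1} := [ffun j => lift ord0 j].
rewrite (eq_bigr (fun s => ((s == s0)%:R : K^o))); last first.
  move=> s /eqP E; rewrite ffunE -prod_eqR; apply: eq_bigr => j _.
  have /existsP [k /eqP Hk] := Hs j.
  have Hsj : s j = lift ord0 (f' k).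
    by have := congr1 (fun h : {ffun 'I_a -> 'I_n.+1} => h k) E; rewrite !ffunE Hk.
  by rewrite !ffunE Hsj [lift _ _ == ord0]eq_sym (negbTE (neq_lift _ _)) subr0.
rewrite sum_ind; congr (_%:R).
rewrite (_ : [ffun j => s0 (f j)] = iota f); last by apply/ffunP => j; rewrite !ffunE.
by rewrite (inj_eq (@iota_inj _ _)).
Qed.

Lemma Phi_Ec n a (c : C K a n.+1) : inKer c -> Phi (Ec c) = c.
Proof.
move=> [Hs _]; apply/ffunP => f'; rewrite ffunE /Ec sum_ffunE.
rewrite (eq_bigr (fun f => c f * (f == f')%:R)); last first.
  move=> f _; rewrite scaleKo; case: (boolP (surjb f)) => Hf.
    by rewrite precomp_u.
  by rewrite Hs // !mul0r.
rewrite (bigD1 f') //= eqxx mulr1 big1 ?addr0 // => f /negbTE ->.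
by rewrite mulr0.
Qed.


Lemma Ec_contr a n m (c : C K a.+1 n.+1) (x : VV n.+1 m) : inKer c -> inPbarT x ->
  forall i t, \sum_y Ec c x (upd t i y) = 0.
Proof.
move=> [Hs Hr] Hx i t.
case: m x t Hx => [|m] x t Hx; first by rewrite big_ord0.
have Hcx := contr_Pbar Hx.
pose A (f : {ffun 'I_a.+1 -> 'I_n.+1}) :=
  \sum_(s : {ffun 'I_n.+1 -> 'I_m.+1} | [forall k, (k != i) ==> (s (f k) == t k)]) x s.
have -> : \sum_y Ec c x (upd t i y) = \sum_f c f * A f.
  rewrite /Ec; under eq_bigr do rewrite sum_ffunE.
  rewrite exchange_big; apply: eq_bigr => f _.
  under eq_bigr do rewrite scaleKo ffunE.
  rewrite -mulr_sumr; congr (_ * _).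
  rewrite /A (partition_big (fun s : {ffun 'I_n.+1 -> 'I_m.+1} => s (f i)) xpredT (R := K^o)) //=.
  apply: eq_bigr => y _; apply: eq_bigl => s.
  apply/eqP/andP => [E|[/forallP H /eqP Hy]].
    have E' := fun k => congr1 (fun h : {ffun 'I_a.+1 -> 'I_m.+1} => h k) E.
    split.
      apply/forallP => k; apply/implyP => Hk.
      by have := E' k; rewrite !ffunE (negbTE Hk) => ->.
    by have := E' i; rewrite !ffunE eqxx => ->.
  apply/ffunP => k; rewrite !ffunE; case: (k =P i) => [->|/eqP Hk] //.
  by apply/eqP; have := H k; rewrite Hk.
have A_res : forall f f', res i f = res i f' -> A f = A f'.
  move=> f f' E; apply: eq_bigl => s; apply: eq_forallb => k.
  case: (boolP (k != i)) => Hk //=; by rewrite (res_eq E Hk).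
have A0 : forall f, ~~ surj_off i f -> A f = 0.
  move=> f; rewrite /surj_off negb_forall => /existsP [y0].
  rewrite negb_exists => /forallP Hy0.
  apply: (sum_contr0 (j := y0) ord0); last exact: Hcx.
  move=> s y; apply: eq_forallb => k; case: (boolP (k != i)) => Hk //=.
  rewrite updE (_ : (f k == y0) = false) //; apply/negbTE; by move: (Hy0 k); rewrite Hk.
rewrite (bigID (fun f => surj_off i f)) /= [X in _ + X]big1 ?addr0 => [|f Hf]; last first.
  by rewrite A0 // mulr0.
rewrite (partition_big (res i) xpredT (R := K^o)) //= big1 // => H _.
case: (pickP (fun f => surj_off i f && (res i f == H))) => [f0 /andP [_ /eqP Hf0]|none]; last first.
  by rewrite big_pred0.
rewrite (eq_bigr (fun f => c f * A f0)); last first.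
  by move=> f /andP [_ /eqP Hf]; rewrite (A_res f f0) // Hf Hf0.
rewrite -big_distrl /=.
have := congr1 (fun r : {ffun 'I_a.+1 -> {ffun {ffun 'I_a.+1 -> option 'I_n.+1} -> K}} => r i H) Hr; rewrite !ffunE => Hz.
rewrite (eq_bigl (fun f => surjb f && surj_off i f && (res i f == H))) ?Hz ?mul0r // => f.
by case: (boolP (surj_off i f)) => Hso; rewrite ?andbF //= (surj_off_surjb Hso).
Qed.

Lemma NatTr_Ec a n (c : C K a.+1 n.+1) : inKer c -> NatTr (Ec c).
Proof.
move=> Hk; split.
- by move=> m x Hx; apply: Pbar_of_contr; exact: Ec_contr.
- by move=> m c0 x y _ _; exact: Ec_lin.
- by move=> m k g x _; exact: Ec_natural.
Qed.


Lemma ffun0_eq (T : Type) (f g : {ffun 'I_0 -> T}) : f = g.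
Proof. by apply/ffunP => [[]]. Qed.

Lemma C0_eq a (c c' : C K a.+1 0) : c = c'.
Proof. by apply/ffunP => f; case: (f ord0). Qed.

Lemma ord1_eq (y : 'I_1) : y = ord0.
Proof. by apply/val_inj; case: y => [[]]. Qed.

Lemma nat0 a (eta : forall m, VV 0 m -> VV a.+1 m) m (x : VV 0 m) :
  NatTr eta -> inPbarT x -> eta m x = 0.
Proof.
move=> He; case: m x => [|m] x Hx.
  by rewrite (Hx erefl) eta0.
pose x1 : VV 0 1 := [ffun _ => x [ffun i : 'I_0 => ord0]].
pose g : {ffun 'I_1 -> 'I_m.+1} := [ffun _ => ord0].
have Ex : x = push g x1.
  apply/ffunP => t; rewrite [RHS]ffunE (big_pred1 [ffun i : 'I_0 => ord0 : 'I_1]).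
    by rewrite ffunE (ffun0_eq t [ffun i : 'I_0 => ord0]).

  move=> s /=; rewrite (ffun0_eq [ffun j0 => g (s j0)] t) eqxx; apply/esym/eqP; exact: ffun0_eq.
have Hx1 : inPbarT x1 by [].
have Hw : eta 1 x1 = 0.
  have Hp : inPbarT (eta 1 x1) by case: He => Hp _ _; exact: Hp.
  apply/ffunP => t; rewrite [RHS]ffunE; have := contr_Pbar Hp ord0 t; rewrite big_ord1.
  rewrite (_ : upd t ord0 ord0 = t) //; apply/ffunP => j; rewrite updE.
  by case: eqP => // ->; rewrite (ord1_eq (t ord0)).
by rewrite Ex; case: He => _ _ Hn; rewrite Hn // Hw push0.
Qed.

End Work.

Theorem mainTheorem7 (K : fieldType) (a n : nat) : (1 <= a)%N ->
  exists Phi : (forall m, V K n m -> V K a m) -> C K a n,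
  [/\ (* Phi is well defined on natural transformations Pbar^n -> Pbar^a *)
      (forall eta eta', NatTr eta -> NatTr eta' -> sameNat eta eta' ->
         Phi eta = Phi eta'),
      (* K-linear *)
      (forall (c : K) eta eta', NatTr eta -> NatTr eta' ->
         Phi (fun m x => c *: eta m x + eta' m x) = c *: Phi eta + Phi eta'),
      (* lands in the kernel of the total restriction map *)
      (forall eta, NatTr eta -> inKer (Phi eta)),
      (* injective on natural transformations, surjective onto the kernel *)
      (forall eta eta', NatTr eta -> NatTr eta' -> Phi eta = Phi eta' ->
         sameNat eta eta') /\
      (forall c, inKer c -> exists eta, NatTr eta /\ Phi eta = c)
    & (* S_n-equivariant and S_a^op-equivariant *)
      (forall (sigma : {perm 'I_n}) eta, NatTr eta ->
         Phi (actL sigma eta) = postL sigma (Phi eta)) /\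
      (forall (tau : {perm 'I_a}) eta, NatTr eta ->
         Phi (actR eta tau) = preR (Phi eta) tau)].
Proof.
case: a => [//|a] _.
case: n => [|n].
  exists (fun _ => 0); split.
  - by [].
  - by move=> *; apply: C0_eq.
  - move=> eta _; split; first by move=> f; case: (f ord0).
    apply/ffunP => i; apply/ffunP => h; rewrite !ffunE big_pred0 // => f.
    by case: (f ord0).
  - split.
      by move=> eta eta' He He' _ m x Hx; rewrite !nat0.
    move=> c _; exists (fun m x => 0); split; last exact: C0_eq.
    split.
    + by move=> m x _; exact: inPbarT0.
    + by move=> *; rewrite scaler0 addr0.
    + by move=> *; rewrite push0.
  - by split => *; apply: C0_eq.
exists (@Phi K n a.+1); split.
- move=> eta eta' He He' Hs; apply/ffunP => f; rewrite !ffunE Hs //; exact: inPbarT_u.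
- by move=> c eta eta' _ _; apply/ffunP => f; rewrite !ffunE.
- move=> eta He; exact: Phi_inKer.
- split; first by move=> eta eta' He He'; exact: Phi_inj.
  move=> c Hc; exists (Ec c); split; [exact: NatTr_Ec | exact: Phi_Ec].
- split; [move=> sig eta He; exact: Phi_postL | move=> tau eta _; exact: Phi_preR].
Qed.
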